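(* Let $\mathcal{T}=(V,\mathsf{p})$ be a directed forest with leafless support $\mathring{\mathcal{T}}$. Then $v_0\in V$ is not a root of $\mathring{\mathcal{T}}$ if and only if $v_0\notin\mathrm{root}(\mathcal{T})$ and there exists a sequence $\{v_n\}_{n=1}^\infty\subseteq V$ such that $\mathsf{p}(v_{n+1})=v_n$ for all $n\in\{0,1,2,\dots\}$.
   Context: A directed forest is a pair $\mathcal{T}=(V,\mathsf{p})$ where $V$ is a nonempty set and $\mathsf{p}\colon V\to V$ satisfies: if $n\in\mathbb{N}$, $v\in V$ and $\mathsf{p}^n(v)=v$, then $\mathsf{p}(v)=v$. Roots: $\mathrm{root}(\mathcal{T})=\{v:\mathsf{p}(v)=v\}$. The forest is leafless if $\mathsf{p}(V)=V$. $(V,\mathsf{p}_1)$ is thinner than $(V,\mathsf{p}_2)$ if $\mathsf{p}_1(v)\in\{v,\mathsf{p}_2(v)\}$ for all $v\in V$ (a partial order). The leafless support $\mathring{\mathcal{T}}=(V,\mathring{\mathsf{p}})$ of $\mathcal{T}$ is the greatest (thickest) leafless directed forest on $V$ thinner than $\mathcal{T}$; such a greatest element exists. *)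

(* Defs.v *)
(* A directed forest on V: V nonempty, and p^n(v) = v for some n >= 1
   forces p(v) = v.  (n ranges over positive integers: with n = 0 the
   condition would force p = id.) *)
Definition directed_forest (V : Type) (p : V -> V) : Prop :=
  inhabited V /\
  forall (n : nat) (v : V), Nat.iter (S n) p v = v -> p v = v.

Definition is_root (V : Type) (p : V -> V) (v : V) : Prop := p v = v.

Definition leafless (V : Type) (p : V -> V) : Prop :=
  forall v : V, exists u : V, p u = v.

Definition thinner (V : Type) (p1 p2 : V -> V) : Prop :=
  forall v : V, p1 v = v \/ p1 v = p2 v.

Definition leafless_support (V : Type) (p q : V -> V) : Prop :=
  directed_forest V q /\ leafless V q /\ thinner V q p /\
  (forall r : V -> V, directed_forest V r -> leafless V r -> thinner V r p ->
     thinner V r q).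

(* Main.v *)
Require Import Defs.
From Stdlib Require Import ClassicalEpsilon.

Lemma thinner_iter (V : Type) (p r : V -> V) (ht : thinner V r p) :
  forall n x, Nat.iter n r x = Nat.iter n p x \/
              r (Nat.iter n r x) = Nat.iter n r x.
Proof.
  induction n as [|n IH]; intros x; simpl.
  - left; reflexivity.
  - destruct (IH x) as [H|H].
    + destruct (ht (Nat.iter n r x)) as [H1|H1].
      * right. rewrite H1. exact H1.
      * left. rewrite H1, H. reflexivity.
    + right. rewrite H. exact H.
Qed.

Lemma thinner_forest (V : Type) (p r : V -> V) (hT : directed_forest V p)
  (ht : thinner V r p) : directed_forest V r.
Proof.
  destruct hT as [hi hc]. split; [exact hi|].
  intros n x Hx.
  destruct (thinner_iter V p r ht (S n) x) as [H|H].
  - rewrite Hx in H. symmetry in H. apply hc in H.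
    destruct (ht x) as [H1|H1]; [exact H1| rewrite H1; exact H].
  - rewrite Hx in H. exact H.
Qed.

Theorem lemma4p5 (V : Type) (p q : V -> V)
  (hT : directed_forest V p) (hq : leafless_support V p q) (v0 : V) :
  ~ is_root V q v0 <->
  (~ is_root V p v0 /\
   exists v : nat -> V, v 0 = v0 /\ forall n : nat, p (v (S n)) = v n).
Proof.
  destruct hq as [hqf [hql [hqt hmax]]].
  unfold is_root. split.
  - intros Hq.
    assert (Hp : p v0 <> v0).
    { destruct (hqt v0) as [H|H]; [contradiction|]. rewrite <- H. exact Hq. }
    split; [exact Hp|].
    pose (g := fun y => proj1_sig (constructive_indefinite_description _ (hql y))).
    assert (Hg : forall y, q (g y) = y).
    { intro y. unfold g. destruct (constructive_indefinite_description _ (hql y)) as [u Hu].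
      exact Hu. }
    assert (Hinv : forall n, q (Nat.iter n g v0) <> Nat.iter n g v0).
    { induction n as [|n IH]; simpl; [exact Hq|].
      intro E. apply IH. pose proof (Hg (Nat.iter n g v0)) as E2.
      rewrite E in E2. rewrite <- E2 at 1. rewrite E. exact E2. }
    exists (fun n => Nat.iter n g v0). split; [reflexivity|].
    intro n. simpl.
    destruct (hqt (g (Nat.iter n g v0))) as [H|H].
    + exfalso. apply (Hinv (S n)). simpl. exact H.
    + rewrite <- H. apply Hg.
  - intros [Hp [v [Hv0 Hv]]] Hq.
    pose (A := fun x => q x <> x \/ exists n, v n = x).
    pose (r := fun x => if excluded_middle_informative (A x) then p x else x).
    assert (Hrt : thinner V r p).
    { intro x. unfold r. destruct (excluded_middle_informative (A x)); auto. }
    assert (Hrf : directed_forest V r) by (apply (thinner_forest V p r hT Hrt)).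
    assert (HrA : forall x, A x -> r x = p x).
    { intros x Ha. unfold r. destruct (excluded_middle_informative (A x)); tauto. }
    assert (HrnA : forall x, ~ A x -> r x = x).
    { intros x Ha. unfold r. destruct (excluded_middle_informative (A x)); tauto. }
    assert (Hrl : leafless V r).
    { intro y. destruct (classic (A y)) as [Ha|Ha].
      - destruct Ha as [Hqy | [n Hn]].
        + destruct (hql y) as [u Hu]. exists u.
          assert (Hu2 : q u <> u).
          { intro E. apply Hqy. rewrite E in Hu. subst u. exact E. }
          rewrite HrA by (left; exact Hu2).
          destruct (hqt u) as [H|H]; [contradiction|]. rewrite <- H. exact Hu.
        + exists (v (S n)). rewrite HrA by (right; exists (S n); reflexivity).
          rewrite Hv. exact Hn.
      - exists y. apply HrnA. exact Ha. }
    destruct (hmax r Hrf Hrl Hrt v0) as [H|H];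
      rewrite HrA in H by (right; exists 0; exact Hv0); congruence.
Qed.
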